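(* Let $S=K[t_1,\ldots,t_s]$ over a field $K$ with $s\geq2$, let $d_1\leq\cdots\leq d_s$ be positive integers with $d_1\geq2$, and let $L$ be the ideal generated by all $t_it_j^{d_j}$ with $1\leq i<j\leq s$. Let $t^a=t_r^{a_r}\cdots t_s^{a_s}$ be a monomial not in $L$ (a standard monomial of $S/L$ with respect to any monomial order), where $1\leq r\leq s$, $a_r\geq1$ and $a_i=0$ for $i<r$. Then $0\leq a_i\leq d_i-1$ for $i>r$ and $$\deg(S/(L,t^a))=\begin{cases}\deg(S/L)-\sum_{i=2}^{s}(d_i-a_i)\cdots(d_s-a_s)-1 & \text{if } r=s,\ a_s\leq d_s,\\ \deg(S/L)-1 & \text{if } r=s,\ a_s\geq d_s+1,\\ \deg(S/L)-\sum_{i=2}^{r+1}(d_i-a_i)\cdots(d_s-a_s) & \text{if } r<s,\ a_r\leq d_r,\\ \deg(S/L)-(d_{r+1}-a_{r+1})\cdots(d_s-a_s) & \text{if } r<s,\ a_r\geq d_r+1.\end{cases}$$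
   Context: For a graded ideal $J$ with Hilbert function $H_J(d)=\dim_K(S_d/J_d)$ and $k=\dim(S/J)$, $\deg(S/J)=(k-1)!\lim_{d\to\infty}H_J(d)/d^{k-1}$ if $k\geq1$ and $\dim_K(S/J)$ if $k=0$. In the formulas $a_i=0$ for $i<r$. *)

(* Defs.v *)
From HB Require Import structures.
From mathcomp Require Import all_boot all_order all_algebra.
From mathcomp Require Import mpoly.
Set Implicit Arguments. Unset Strict Implicit. Unset Printing Implicit Defensive.
Import Order.TTheory GRing.Theory Num.Theory.
Local Open Scope ring_scope.

Section Defs.
Variables (K : fieldType) (n : nat).
Local Notation S := {mpoly K[n]}.

Definition ideal_gen (G : S -> Prop) : S -> Prop :=
  fun p => exists (m : nat) (g q : 'I_m -> S),
    (forall i, G (g i)) /\ p = \sum_(i < m) q i * g i.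

(* homogeneous of (standard) degree d; 0 is homogeneous of every degree *)
Definition is_homog (d : nat) (p : S) : Prop :=
  forall mm, mm \in msupp p -> mdeg mm = d.

(* H_J(d) = dim_K (S_d / J_d) = h : the classes of h homogeneous polynomials
   of degree d form a K-basis of S_d / J_d  (J_d = J ∩ S_d). *)
Definition hilbert_value (J : S -> Prop) (d h : nat) : Prop :=
  exists b : 'I_h -> S,
    (forall i, is_homog d (b i)) /\
    (forall f, is_homog d f -> exists c : 'I_h -> K, J (f - \sum_(i < h) c i *: b i)) /\
    (forall c : 'I_h -> K, J (\sum_(i < h) c i *: b i) -> forall i, c i = 0).

Definition quotient_dim (J : S -> Prop) (h : nat) : Prop :=
  exists b : 'I_h -> S,
    (forall f, exists c : 'I_h -> K, J (f - \sum_(i < h) c i *: b i)) /\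
    (forall c : 'I_h -> K, J (\sum_(i < h) c i *: b i) -> forall i, c i = 0).

Definition is_ideal (P : S -> Prop) : Prop :=
  P 0 /\ (forall x y, P x -> P y -> P (x + y)) /\ (forall r x, P x -> P (r * x)).

Definition is_prime_ideal (P : S -> Prop) : Prop :=
  is_ideal P /\ ~ P 1 /\ (forall x y, P (x * y) -> P x \/ P y).

(* a strictly increasing chain P_0 ⊊ P_1 ⊊ ... ⊊ P_k of prime ideals of S
   containing J, i.e. a chain of primes of length k in S/J *)
Definition prime_chain (J : S -> Prop) (k : nat) : Prop :=
  exists P : nat -> (S -> Prop),
    (forall i, (i <= k)%N -> is_prime_ideal (P i) /\ (forall x, J x -> P i x)) /\
    (forall i, (i < k)%N ->
       (forall x, P i x -> P i.+1 x) /\ exists x, P i.+1 x /\ ~ P i x).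

Definition krull_dim (J : S -> Prop) (k : nat) : Prop :=
  prime_chain J k /\ forall k', prime_chain J k' -> (k' <= k)%N.

Definition converges (u : nat -> rat) (l : rat) : Prop :=
  forall eps : rat, 0 < eps -> exists D : nat, forall d, (D <= d)%N -> `|u d - l| < eps.

(* deg(S/J) = e, where k = dim(S/J):
   e = (k-1)! lim_{d->oo} H_J(d)/d^(k-1) if k >= 1, and e = dim_K(S/J) if k = 0 *)
Definition is_degree (J : S -> Prop) (e : rat) : Prop :=
  exists (k : nat) (H : nat -> nat),
    krull_dim J k /\ (forall d, hilbert_value J d (H d)) /\
    (if k is k'.+1 then
       converges (fun d => (H d)%:R / (d%:R ^+ k')) (e / (k'`!)%:R)
     else exists h, quotient_dim J h /\ e = h%:R).

End Defs.

(* the monomial t^a = t_1^{a_1} ... t_s^{a_s}; variables t_1..t_s are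
   'X_0 .. 'X_(s-1), exponents a : nat -> nat are 1-based *)
Definition monoA (K : fieldType) (s : nat) (a : nat -> nat) : {mpoly K[s]} :=
  'X_[[multinom a i.+1 | i < s]].

Definition Lgens (K : fieldType) (s : nat) (d : nat -> nat) : {mpoly K[s]} -> Prop :=
  fun g => exists i j : 'I_s, (i < j)%N /\ g = 'X_i * 'X_j ^+ d (j.+1).

Definition tailprod (s : nat) (d a : nat -> nat) (i : nat) : rat :=
  \prod_(i <= j < s.+1) ((d j)%:R - (a j)%:R).
Arguments monoA : clear implicits.
Arguments Lgens : clear implicits.

(* Main.v *)
Require Import Defs.
From HB Require Import structures.
From mathcomp Require Import all_boot all_order all_algebra.
From mathcomp Require Import mpoly.
From mathcomp Require Import zify.
From Stdlib Require Import Classical.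
Import Order.TTheory GRing.Theory Num.Theory.
Set Implicit Arguments. Unset Strict Implicit.

Lemma sum_range B lo hi : (hi <= B)%N ->
  (\sum_(i < B) ((lo <= i) && (i < hi)) = hi - lo)%N.
Proof.
elim: B hi => [|B IH] hi hB; first by rewrite big_ord0; move: hB; rewrite leqn0 => /eqP ->.
rewrite big_ord_recr /=.
case: (leqP hi B) => h.
  by rewrite IH // andbF addn0.
have -> : hi = B.+1 by lia.
rewrite (eq_bigr (fun i : 'I_B => ((lo <= i) && (i < B) : nat))); last first.
  by move=> i _; rewrite ltnS (ltnW (ltn_ord i)) ltn_ord.
rewrite IH //; case: (leqP lo B) => /= ?; rewrite ?andbT ?andbF ?ltnSn; lia.
Qed.

Lemma card_range B lo hi : (hi <= B)%N ->
  #|[pred x : 'I_B | (lo <= x) && (x < hi)]| = (hi - lo)%N.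
Proof.
move=> hB; rewrite -(sum_range lo hB) -sum1_card big_mkcond /=.
by apply: eq_bigr => i _; rewrite inE; case: (_ && _).
Qed.

Lemma foldr_prod (s : seq nat) : foldr muln 1%N s = (\prod_(x <- s) x)%N.
Proof. by elim: s => [|x s IH]; rewrite ?big_nil ?big_cons //= IH. Qed.

Section Count.
Variables (n : nat) (D e : 'I_n -> nat) (d : nat).
Local Notation FT := {ffun 'I_n -> 'I_d.+1}.

Definition sumf (f : FT) := (\sum_i (f i : nat))%N.
Definition stdL (f : FT) := [forall i : 'I_n, forall j : 'I_n, ((i < j)%N && (0 < f i)%N) ==> (f j < D j)%N].
Definition first_nz (f : FT) (k : 'I_n) := (0 < f k)%N && [forall j : 'I_n, (j < k)%N ==> (f j == 0%N :> nat)].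
Definition geq_e (f : FT) := [forall j : 'I_n, (e j <= f j)%N].

Lemma first_nz_sum f : (0 < sumf f)%N -> (\sum_k (first_nz f k : nat) = 1)%N.
Proof.
move=> hs.
have [j fj] : exists j, (0 < f j)%N.
  apply/existsP; apply: contraTT hs; rewrite negb_exists => /forallP H.
  rewrite -leqNgt leqn0 /sumf sum_nat_eq0; apply/forallP => i; have := H i; by rewrite lt0n negbK.
case: (@arg_minnP _ j (fun i => 0 < f i)%N (fun i : 'I_n => (i : nat)) fj) => k fk kmin.
have fnk : first_nz f k.
  rewrite /first_nz fk /=; apply/forallP => i; apply/implyP => ik.
  apply: contraTT ik; rewrite -lt0n -leqNgt => /kmin //.
rewrite (bigD1 k) //= fnk big1 // => i ik; apply/eqP; rewrite eqb0.
rewrite /first_nz; apply/negP => /andP [fi /forallP H].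
case: (ltngtP i k) => [ik'|ki|e'].
- by have := kmin _ fi; rewrite leqNgt ik'.
- by have := H k; rewrite ki /= => /eqP h; rewrite h in fk.
- by move: ik; rewrite (val_inj e') eqxx.
Qed.

Lemma count_k (k : 'I_n) :
  (forall j : 'I_n, (j < k)%N -> e j = 0%N) ->
  (\sum_(j : 'I_n) D j + e k < d)%N ->
  #|[pred f : FT | (sumf f == d) && stdL f && first_nz f k && geq_e f]|
    = (\prod_(j : 'I_n | (k < j)%N) (D j - e j))%N.
Proof.
move=> e0 hd.
set A := [pred f : FT | _].
pose h (f : FT) : FT := [ffun j : 'I_n => if (k < j)%N then f j else ord0].
pose F (j : 'I_n) := [pred x : 'I_d.+1 | if (k < j)%N then (e j <= x)%N && (x < D j)%N else x == ord0].
have Dle : forall j, (D j <= d.+1)%N.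
  move=> j; apply: leqW; apply: leq_trans (ltnW hd); apply: leq_trans (leq_addr _ _).
  by rewrite (bigD1 j) //= leq_addr.
have hinj : {in A &, injective h}.
  move=> f g; rewrite !inE => /andP [/andP [/andP [sf _] nf] _] /andP [/andP [/andP [sg _] ng] _] hfg.
  have eqo : forall j, j != k -> f j = g j.
    move=> j jk; case: (ltngtP k j) => [kj|jk'|e'].
    - by have := congr1 (fun F : FT => F j) hfg; rewrite /h !ffunE kj.
    - move: nf ng => /andP [_ /forallP /(_ j)] + /andP [_ /forallP /(_ j)].
      rewrite jk' /= => /eqP f0 /eqP g0; apply: val_inj => /=; by rewrite f0 g0.
    - by move: jk; rewrite (val_inj e') eqxx.
  apply/ffunP => j; case: (eqVneq j k) => [->|jk]; last exact: eqo.
  apply: val_inj; move: sf sg; rewrite /sumf (bigD1 k) //= (bigD1 k (P := xpredT)) //=.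
  rewrite (eq_bigr (fun i => (g i : nat))); last by move=> i /eqo ->.
  move=> /eqP e1 /eqP e2 /=; apply/eqP; rewrite -(eqn_add2r (\sum_(i < n | i != k) (g i : nat))) e2; apply/eqP; exact: e1.
rewrite -(card_in_imset hinj).
have -> : #|[set h x | x in A]| = #|family F|.
  apply: eq_card => c; apply/imsetP/familyP.
    move=> [f]; rewrite inE => /andP [/andP [/andP [sf st] nf] ge] -> j.
    rewrite /F /h ffunE inE; case: (ltnP k j) => kj //=.
    move: ge => /forallP /(_ j) -> /=.
    move: st => /forallP /(_ k) /forallP /(_ j); rewrite kj /=.
    by move: nf => /andP [-> _] /=.
  move=> cF.
  pose T := (\sum_(j : 'I_n) (c j : nat))%N.
  have cle : forall j, (c j <= D j)%N.
    move=> j; have := cF j; rewrite /F inE; case: ifP => _.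
      by move=> /andP [_ /ltnW].
    by move/eqP => ->.
  have TD : (T <= \sum_j D j)%N by apply: leq_sum => j _.
  have Td : (T < d)%N by apply: leq_ltn_trans TD (leq_ltn_trans (leq_addr _ _) hd).
  have c0 : forall j : 'I_n, (j <= k)%N -> (c j : nat) = 0%N.
    move=> j jk; have := cF j; rewrite /F inE ltnNge jk /= => /eqP -> //.
  pose f : FT := [ffun j : 'I_n => if j == k then inord (d - T) else c j].
  have fk : (f k : nat) = (d - T)%N by rewrite ffunE eqxx inordK // ltnS leq_subr.
  have fo : forall j, j != k -> f j = c j by move=> j jk; rewrite ffunE (negbTE jk).
  exists f; last first.
    apply/ffunP => j; rewrite /h ffunE; case: ifP => kj.
      by rewrite fo // neq_ltn kj orbT.
    by apply: val_inj; rewrite /= c0 // leqNgt kj.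
  rewrite /A inE; apply/andP; split; [apply/andP; split; [apply/andP; split|]|].
  - rewrite /sumf (bigD1 k) //= fk (eq_bigr (fun j => (c j : nat))); last by move=> j /fo ->.
    have : T = (c k + \sum_(j | j != k) c j)%N by rewrite /T (bigD1 k).
    rewrite c0 // add0n => <-; apply/eqP; lia.
  - apply/forallP => i; apply/forallP => j; apply/implyP => /andP [ij fi].
    have ki : (k <= i)%N.
      rewrite leqNgt; apply/negP => ik; move: fi.
      by rewrite fo ?c0 ?(ltnW ik) // neq_ltn ik.
    have kj : (k < j)%N by apply: leq_ltn_trans ki ij.
    have := cF j; rewrite /F inE kj => /andP [_].
    by rewrite fo // neq_ltn kj orbT.
  - rewrite /first_nz fk subn_gt0; apply/andP; split.
      by apply: leq_ltn_trans TD (leq_ltn_trans (leq_addr _ _) hd).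
    apply/forallP => j; apply/implyP => jk.
    by rewrite fo ?c0 ?(ltnW jk) // neq_ltn jk.
  - apply/forallP => j; case: (eqVneq j k) => [->|jk].
      have Te : (T + e k < d)%N by apply: leq_ltn_trans _ hd; rewrite leq_add2r.
      rewrite fk; lia.
    rewrite fo //; case: (ltngtP j k) => [jk'|kj|e'].
    + by rewrite e0.
    + by have := cF j; rewrite /F inE kj => /andP [].
    + by move: jk; rewrite (val_inj e') eqxx.
rewrite card_family foldr_prod big_map big_enum /= big_mkcond /=.
rewrite [RHS]big_mkcond /=; apply: eq_bigr => j _; case: (ltnP k j) => kj.
  by rewrite -(card_range (e j) (Dle j)); apply: eq_card => x; rewrite !inE.
by rewrite (eq_card (B := pred1 ord0)) ?card1 // => x; rewrite !inE.
Qed.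


Lemma count_all :
  (0 < d)%N ->
  (forall k : 'I_n, (\sum_(j : 'I_n) D j + e k < d)%N) ->
  #|[pred f : FT | (sumf f == d) && stdL f && geq_e f]| =
  (\sum_(k < n) (if [forall j : 'I_n, (j < k)%N ==> (e j == 0%N)]
                 then \prod_(j : 'I_n | (k < j)%N) (D j - e j) else 0))%N.
Proof.
move=> d0 hd.
rewrite -sum1_card.
rewrite (eq_bigr (fun f => \sum_(k < n) (first_nz f k : nat))%N); last first.
  by move=> f /andP [/andP [/eqP sf _] _]; rewrite first_nz_sum // sf.
rewrite exchange_big /=; apply: eq_bigr => k _.
rewrite -big_mkcondr /= sum1dep_card.
case: ifP => h0.
  rewrite -count_k //; last by move=> j jk; move/forallP: h0 => /(_ j); rewrite jk => /eqP.
  apply: eq_card => f; rewrite !inE; by case: (sumf f == d); case: (stdL f); case: (first_nz f k); case: (geq_e f).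
apply: eq_card0 => f; rewrite !inE; apply/negP => /andP [/andP [_ ge] /andP [_ /forallP fz]].
move/negbT: h0 => /negP; apply; apply/forallP => j; apply/implyP => jk.
move/forallP: ge => /(_ j); have := fz j; rewrite jk /= => /eqP ->; by rewrite leqn0.
Qed.

End Count.

Local Open Scope ring_scope.

Section Ideals.
Variables (K : fieldType) (n : nat).
Local Notation S := {mpoly K[n]}.

Lemma ideal_gen0 (G : S -> Prop) : ideal_gen G 0.
Proof. exists 0%N, (fun _ => 0), (fun _ => 0); split; [by case | by rewrite big_ord0]. Qed.

Lemma ideal_genD (G : S -> Prop) x y : ideal_gen G x -> ideal_gen G y -> ideal_gen G (x + y).
Proof.
move=> [m1 [g1 [q1 [H1 ->]]]] [m2 [g2 [q2 [H2 ->]]]].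
exists (m1 + m2)%N, (fun i => match split i with inl j => g1 j | inr j => g2 j end),
  (fun i => match split i with inl j => q1 j | inr j => q2 j end); split.
  by move=> i; case: (split i).
rewrite big_split_ord /=; congr (_ + _); apply: eq_bigr => i _.
  by rewrite -[lshift _ _]/(unsplit (inl i)) unsplitK.
by rewrite -[rshift _ _]/(unsplit (inr i)) unsplitK.
Qed.

Lemma ideal_genM (G : S -> Prop) r x : ideal_gen G x -> ideal_gen G (r * x).
Proof.
move=> [m1 [g1 [q1 [H1 ->]]]]; exists m1, g1, (fun i => r * q1 i); split => //.
by rewrite mulr_sumr; apply: eq_bigr => i _; rewrite mulrA.
Qed.

Lemma ideal_gen_in (G : S -> Prop) g : G g -> ideal_gen G g.
Proof. move=> Gg; exists 1%N, (fun _ => g), (fun _ => 1); split => //; by rewrite big_ord1 mul1r. Qed.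

Lemma ideal_gen_sum (G : S -> Prop) (I : Type) (r : seq I) (F : I -> S) :
  (forall i, ideal_gen G (F i)) -> ideal_gen G (\sum_(i <- r) F i).
Proof.
move=> H; elim: r => [|x r IH]; first by rewrite big_nil; apply: ideal_gen0.
by rewrite big_cons; apply: ideal_genD.
Qed.

Lemma ideal_gen_mono (G G' : S -> Prop) p : (forall g, G g -> G' g) -> ideal_gen G p -> ideal_gen G' p.
Proof. by move=> H [m [g [q [Hg ->]]]]; exists m, g, q; split => // i; apply: H. Qed.

Section Mono.
Variables (G : S -> Prop) (red : pred 'X_{1..n}).
Hypothesis hG : forall g, G g -> exists mm, g = 'X_[mm] /\ red mm.
Hypothesis hup : forall m m', red m -> (m <= m')%MM -> red m'.
Hypothesis hred : forall m, red m -> ideal_gen G 'X_[m].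

Lemma mono_ideal p : ideal_gen G p <-> (forall m, m \in msupp p -> red m).
Proof.
split.
  move=> [k [g [q [Hg ->]]]].
  pose Q (p : S) := forall m, m \in msupp p -> red m.
  apply: (big_ind Q).
  - by move=> m; rewrite mcoeff_msupp mcoeff0 eqxx.
  - move=> x y Qx Qy m /msuppD_le; rewrite mem_cat => /orP [] ?; [exact: Qx| exact: Qy].
  move=> i _ m /msuppM_le /allpairsP [[m1 m2] [_ /= ]].
  have [mm [-> rmm]] := hG (Hg i).
  rewrite msuppX mem_seq1 => /eqP -> ->.
  by apply: (hup rmm); apply: lem_addl.
move=> H; rewrite (mpolyE p); apply: ideal_gen_sum => m.
case: (boolP (m \in msupp p)) => mp.
  by rewrite -mul_mpolyC; apply: ideal_genM; apply: hred; apply: H.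
by rewrite (memN_msupp_eq0 mp) scale0r; apply: ideal_gen0.
Qed.
End Mono.

End Ideals.


Section Hilb.
Variables (K : fieldType) (n : nat).
Local Notation S := {mpoly K[n]}.

Definition monf (d : nat) (f : {ffun 'I_n -> 'I_d.+1}) : 'X_{1..n} :=
  [multinom (f i : nat) | i < n].

Lemma monf_inj d : injective (@monf d).
Proof.
move=> f g /mnmP H; apply/ffunP => i; apply: val_inj; have := H i.
by rewrite !mnmE.
Qed.

Lemma mdeg_monf d f : mdeg (@monf d f) = (\sum_i (f i : nat))%N.
Proof. by rewrite mdegE; apply: eq_bigr => i _; rewrite mnmE. Qed.

Definition stdset (red : pred 'X_{1..n}) d :=
  [pred f : {ffun 'I_n -> 'I_d.+1} | ((\sum_i (f i : nat)) == d)%N && ~~ red (monf f)].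

Variables (J : S -> Prop) (red : pred 'X_{1..n}).
Hypothesis hJ : forall p, J p <-> (forall m, m \in msupp p -> red m).

Lemma coef_sum d h (c : 'I_h -> K) (e : 'I_h -> {ffun 'I_n -> 'I_d.+1}) m :
  mcoeff m (\sum_(i < h) c i *: 'X_[monf (e i)] : S) = \sum_(i < h) c i * (monf (e i) == m)%:R.
Proof. rewrite (raddf_sum (mcoeff m)); apply: eq_bigr => i _; rewrite -mcoeffX; exact: mcoeffZ. Qed.

Lemma hilb d : hilbert_value J d #|stdset red d|.
Proof.
set A := stdset red d.
exists (fun i => 'X_[monf (enum_val (A:=A) i)]); split; [|split].
- move=> i mm; rewrite msuppX mem_seq1 => /eqP ->.
  by have := enum_valP i; rewrite inE mdeg_monf => /andP [/eqP].
- move=> f hf; exists (fun i => f@_(monf (enum_val (A:=A) i))).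
  apply/hJ => m; apply: contraTT => rm.
  rewrite mcoeff_msupp negbK mcoeffB coef_sum subr_eq0; apply/eqP.
  have [dm|dm] := eqVneq (mdeg m) d.
    pose g : {ffun 'I_n -> 'I_d.+1} := [ffun i => inord (m i)].
    have mg : monf g = m.
      apply/mnmP => i; rewrite mnmE ffunE inordK // ltnS -dm mdegE.
      by rewrite (bigD1 i) //= leq_addr.
    have gA : g \in A.
      by rewrite inE -mdeg_monf mg dm eqxx rm.
    rewrite (bigD1 (enum_rank_in gA g)) //= enum_rankK_in // mg eqxx mulr1.
    rewrite big1 ?addr0 // => i ne; rewrite (_ : (monf _ == m) = false) ?mulr0 //.
    apply/negbTE; apply: contra ne => /eqP e; apply/eqP.
    apply: enum_val_inj; rewrite enum_rankK_in //; apply: monf_inj; by rewrite e mg.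
  rewrite big1.
    apply/eqP; rewrite mcoeff_eq0; apply: contra dm => mf; apply/eqP; exact: hf.
  move=> i _; rewrite (_ : (monf _ == m) = false) ?mulr0 //.
  apply/negbTE; apply: contra dm => /eqP <-; rewrite mdeg_monf.
  by have := enum_valP i; rewrite inE => /andP [].
- move=> c /hJ H i; case: (eqVneq (c i) 0) => // ci; exfalso.
  have := enum_valP i; rewrite inE => /andP [_ /negP]; apply; apply: H.
  rewrite mcoeff_msupp coef_sum (bigD1 i) //= eqxx mulr1 big1 ?addr0 //.
  move=> j ji; rewrite (_ : (_ == _) = false) ?mulr0 //.
  by apply/negbTE; apply: contra ji => /eqP /monf_inj /enum_val_inj ->.
Qed.
End Hilb.


Section PolyMax.
Variable K : fieldType.
Lemma poly_no_chain (I1 I2 : {poly K} -> Prop) :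
  (forall x y, I1 (x * y) -> I1 x \/ I1 y) ->
  (forall r x, I1 x -> I1 (r * x)) ->
  (forall x y, I2 x -> I2 y -> I2 (x + y)) ->
  (forall r x, I2 x -> I2 (r * x)) ->
  ~ I2 1 ->
  (forall x, I1 x -> I2 x) ->
  forall q, I2 q -> ~ I1 q ->
  forall p, I1 p -> p != 0 -> False.
Proof.
move=> pr1 m1 a2 m2 n2 s12 q q2 nq1 p.
elim: {p}(size p) {-2}p (leqnn (size p)) => [|N IH] p sp p1 p0.
  by move: sp; rewrite leqn0 size_poly_eq0 (negbTE p0).
have [u hu] := Bezoutp p q.
set g := gcdp p q in hu.
have g0 : g != 0 by rewrite gcdp_eq0 negb_and p0.
have g2 : I2 g.
  move/eqpP: hu => [[c1 c2] /andP [c10 c20] /= e].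
  have -> : g = (c2^-1 * c1)%:P * (u.1 * p + u.2 * q).
    by rewrite polyCM -mulrA [c1%:P * _]mul_polyC e -[c2 *: g]mul_polyC mulrA -polyCM mulVf // mul1r.
  by apply: (m2); apply: (a2); apply: (m2); [apply: (s12) | ].
have /divpK ep := dvdp_gcdl p q; rewrite -/g in ep.
have /divpK eq' := dvdp_gcdr p q; rewrite -/g in eq'.
have : I1 ((p %/ g) * g) by rewrite ep.
case/pr1 => [h1|g1]; last by apply: nq1; rewrite -eq'; apply: m1.
have h0 : p %/ g != 0.
  by apply: contra p0 => /eqP h; rewrite -ep h mul0r.
have [lt|ge] := ltnP (size (p %/ g)) (size p).
  by apply: (IH (p %/ g)) => //; rewrite -ltnS (leq_trans lt).
have sg : size g = 1%N.
  have := size_mul h0 g0; rewrite ep => e.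
  have gt0 : (0 < size g)%N by rewrite size_poly_gt0.
  apply/eqP; rewrite eqn_leq gt0 andbT.
  move: ge; rewrite e; case: (size g) gt0 => // [[|k]] //= _.
  by rewrite addnS /= -[X in (_ <= X)%N]addn0 leq_add2l.
move/eqP/size_poly1P: sg => [c c0 gc].
apply: n2; have -> : 1 = c^-1%:P * g by rewrite gc -polyCM mulVf.
by apply: m2.
Qed.
End PolyMax.

Section Krull.
Variables (K : fieldType) (n : nat).
Local Notation S := {mpoly K[n]}.

Definition phi (k : 'I_n) : {rmorphism S -> {poly K}} :=
  mmap (polyC) (fun i => if i == k then 'X else 0).

Definition iotaK (k : 'I_n) (q : {poly K}) : S := (map_poly (@mpolyC n K) q).['X_k].

Lemma iotaD k : {morph iotaK k : x y / x + y}.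
Proof. by move=> x y; rewrite /iotaK rmorphD hornerD. Qed.
Lemma iotaM k : {morph iotaK k : x y / x * y}.
Proof. by move=> x y; rewrite /iotaK rmorphM hornerM. Qed.
Lemma iota1 k : iotaK k 1 = 1.
Proof. by rewrite /iotaK rmorph1 hornerC. Qed.
Lemma iota0 k : iotaK k 0 = 0.
Proof. by rewrite /iotaK rmorph0 horner0. Qed.
Lemma iotaC k c : iotaK k c%:P = c%:MP.
Proof. by rewrite /iotaK map_polyC hornerC. Qed.
Lemma iotaX k : iotaK k 'X = 'X_k.
Proof. by rewrite /iotaK map_polyX hornerX. Qed.
Lemma iota_prod k (I : Type) (r : seq I) (F : I -> {poly K}) :
  iotaK k (\prod_(i <- r) F i) = \prod_(i <- r) iotaK k (F i).
Proof. by apply: (big_morph _ (iotaM k) (iota1 k)). Qed.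
Lemma iota_sum k (I : Type) (r : seq I) (F : I -> {poly K}) :
  iotaK k (\sum_(i <- r) F i) = \sum_(i <- r) iotaK k (F i).
Proof. by apply: (big_morph _ (iotaD k) (iota0 k)). Qed.
Lemma iotaXn k q m : iotaK k (q ^+ m) = iotaK k q ^+ m.
Proof. elim: m => [|m IH]; first by rewrite !expr0 iota1. by rewrite !exprS iotaM IH. Qed.

Lemma phiX k m : phi k 'X_[m] = \prod_(i < n) (if i == k then 'X else 0) ^+ m i.
Proof. exact: mmapX. Qed.

Lemma phiXU k : phi k 'X_k = 'X.
Proof.
rewrite phiX (bigD1 k) //= eqxx mnm1E eqxx expr1 big1 ?mulr1 // => i ik.
by rewrite (negbTE ik) mnm1E eq_sym (negbTE ik) expr0.
Qed.

Lemma decomp (Q : S -> Prop) k :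
  is_ideal Q -> (forall i, i != k -> Q 'X_i) ->
  forall p, Q (p - iotaK k (phi k p)).
Proof.
move=> [Q0 [QD QM]] QX p.
have QN : forall x, Q x -> Q (- x) by move=> x Qx; rewrite -mulN1r; apply: QM.
have QS : forall (I : Type) (r : seq I) F, (forall i, Q (F i)) -> Q (\sum_(i <- r) F i).
  by move=> I r F H; elim: r => [|x r IH]; rewrite ?big_nil ?big_cons //; apply: QD.
rewrite {1 2}(mpolyE p) rmorph_sum iota_sum -sumrB; apply: QS => m.
rewrite -mul_mpolyC rmorphM iotaM.
have -> : phi k (p@_m)%:MP = (p@_m)%:P by exact: mmapC.
rewrite iotaC -mulrBr; apply: (QM).
rewrite phiX iota_prod.
case: (boolP [forall i, (i != k) ==> (m i == 0%N)]) => hm.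
  rewrite {1}mpolyXE_id.
  have -> : \prod_(i < n) 'X_i ^+ m i = \prod_(i < n) iotaK k ((if i == k then 'X else 0) ^+ m i) :> S.
    apply: eq_bigr => i _; rewrite iotaXn; case: (eqVneq i k) => [->|ik]; first by rewrite iotaX.
    by move/forallP: hm => /(_ i); rewrite ik /= => /eqP ->; rewrite !expr0.
  rewrite subrr; exact: Q0.
move: hm; rewrite negb_forall => /existsP [i]; rewrite negb_imply => /andP [ik mi].
rewrite (bigD1 i) //= (negbTE ik) iotaXn iota0 expr0n (negbTE mi) mul0r subr0.
have -> : m = (U_(i) + (m - U_(i)))%MM.
  by rewrite addmC submK //; apply/mnm_lepP => j; rewrite mnm1E; case: eqP => // <-; rewrite lt0n.
by rewrite mpolyXD mulrC; apply: (QM); exact: QX.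
Qed.

End Krull.
Arguments phi {K n}.


Section Krull2.
Variables (K : fieldType) (n : nat).
Local Notation S := {mpoly K[n]}.

Lemma kernel_prime (R : idomainType) (f : S -> R) :
  f 0 = 0 -> {morph f : x y / x + y} -> {morph f : x y / x * y} -> f 1 = 1 ->
  is_prime_ideal (fun p => f p = 0).
Proof.
move=> f0 fD fM f1; split; [split; [|split]|split].
- exact: f0.
- by move=> x y /= hx hy; rewrite fD hx hy addr0.
- by move=> r x /= hx; rewrite fM hx mulr0.
- by rewrite /= f1 => /eqP; rewrite oner_eq0.
- move=> x y /=; rewrite fM => /eqP; rewrite mulf_eq0 => /orP [] /eqP; by [left|right].
Qed.

Lemma prime_pow (P : S -> Prop) x m : is_prime_ideal P -> P (x ^+ m) -> P x.
Proof.
move=> [_ [n1 pr]]; elim: m => [|m IH]; first by rewrite expr0.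
by rewrite exprS => /pr [//|/IH].
Qed.

Lemma krull1 (J : S -> Prop) (D : 'I_n -> nat) (k0 : 'I_n) :
  (forall i j : 'I_n, (i < j)%N -> J ('X_i * 'X_j ^+ D j)) ->
  (forall p, J p -> phi k0 p = 0) -> krull_dim J 1.
Proof.
move=> HJ Jphi; split.
  exists (fun i p => if i is 0%N then phi k0 p = 0 else (phi k0 p).[0] = 0); split.
    move=> [|[|i]] // _.
      split; last by move=> x /Jphi.
      apply: kernel_prime; [exact: rmorph0 | exact: rmorphD | exact: rmorphM | exact: rmorph1].
    split; last by move=> x /Jphi /= ->; rewrite horner0.
    apply: (@kernel_prime K (fun p => (phi k0 p).[0])).
    + by rewrite rmorph0 horner0.
    + by move=> x y; rewrite rmorphD hornerD.
    + by move=> x y; rewrite rmorphM hornerM.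
    + by rewrite rmorph1 hornerC.
  move=> [|i] // _; split; first by move=> x /= ->; rewrite horner0.
  exists 'X_k0; rewrite /= phiXU hornerX; split => // /eqP; by rewrite polyX_eq0.
move=> k' [P [HP HS]]; rewrite leqNgt; apply/negP => lt.
have [pr0 J0] := HP 0%N isT.
have [pr1 J1] := HP 1%N (ltnW lt).
have [pr2 J2] := HP 2%N lt.
have [s01 [x1 [x1P1 x1nP0]]] := HS 0%N (ltn_trans (ltnSn 0) lt).
have [s12 [x2 [x2P2 x2nP1]]] := HS 1%N lt.
have [k Hk] : exists k, forall i, i != k -> P 0%N 'X_i.
  case: (classic (forall i, P 0%N 'X_i)) => [all|]; first by exists k0.
  move/not_all_ex_not => [k nk]; exists k => i ik.
  have [[_ [_ _]] [_ prm]] := pr0.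
  case: (ltngtP i k) => [ik'|ki|e].
  - have := J0 _ (HJ i k ik'); case/prm => // /prime_pow; move/(_ pr0) => //.
  - by have := J0 _ (HJ k i ki); case/prm => // /prime_pow; move/(_ pr0).
  - by move: ik; rewrite (val_inj e) eqxx.
have equiv : forall (Q : S -> Prop), is_prime_ideal Q -> (forall x, P 0%N x -> Q x) ->
    forall x, Q x <-> Q (iotaK k (phi k x)).
  move=> Q [[Q0 [QD QM]] _] sub x.
  have hd : Q (x - iotaK k (phi k x)).
    apply: decomp; first by split; [|split].
    by move=> i ik; apply: sub; apply: Hk.
  split => h.
    have -> : iotaK k (phi k x) = (-1) * (x - iotaK k (phi k x)) + x.
      by rewrite mulN1r opprB subrK.
    by apply: QD => //; apply: QM.
  by rewrite -(subrK (iotaK k (phi k x)) x); apply: QD.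
have s02 : forall x, P 0%N x -> P 2%N x by move=> x /s01 /s12.
have [[P10 [P1D P1M]] [P1n P1p]] := pr1.
have [[P20 [P2D P2M]] [P2n P2p]] := pr2.
apply: (@poly_no_chain K (fun q => P 1%N (iotaK k q)) (fun q => P 2%N (iotaK k q))
   _ _ _ _ _ _ (phi k x2) _ _ (phi k x1)).
- by move=> x y; rewrite iotaM => /P1p.
- by move=> r x; rewrite iotaM => /P1M.
- by move=> x y; rewrite iotaD; apply: P2D.
- by move=> r x; rewrite iotaM => /P2M.
- by rewrite iota1.
- by move=> x /s12.
- by rewrite -(equiv _ pr2 s02).
- by rewrite -(equiv _ pr1 s01).
- by rewrite -(equiv _ pr1 s01).
apply/eqP => e; apply: x1nP0.
have [pr0i _] := pr0.
have := decomp pr0i (fun i ik => Hk i ik) x1.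
by rewrite e iota0 subr0.
Qed.
End Krull2.


Section Formula.
Variables (s r : nat) (d a : nat -> nat).
Hypotheses (hr1 : (1 <= r)%N) (hrs : (r <= s)%N) (har : (1 <= a r)%N)
  (ha0 : forall i, (i < r)%N -> a i = 0%N)
  (hat : forall i, (r < i)%N -> (i <= s)%N -> (a i <= d i - 1)%N)
  (hpos : forall i, (1 <= i)%N -> (i <= s)%N -> (0 < d i)%N).

Definition Pn i := (\prod_(i <= j < s.+1) (d j - a j))%N.

Lemma Pn_tail i : (1 <= i)%N -> ((a r <= d r)%N \/ (r < i)%N) -> (Pn i)%:R = tailprod s d a i.
Proof.
move=> i1 h; rewrite /Pn /tailprod natr_prod big_nat [RHS]big_nat; apply: eq_bigr => j /andP [ij js].
rewrite natrB //.
case: (ltngtP j r) => [jr|rj|ejr].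
- by rewrite ha0.
- have h1 := hat rj (js : (j <= s)%N); have h2 := hpos (leq_trans hr1 (ltnW rj)) js. lia.
- rewrite ejr in ij *; case: h => // ri; lia.
Qed.

Lemma Pn_zero i : (d r < a r)%N -> (i <= r)%N -> Pn i = 0%N.
Proof.
move=> hlt ir; rewrite /Pn (@big_cat_nat _ _ _ r) //=; last exact: leqW.
rewrite [X in (_ * X)%N]big_ltn ?ltnS //; have -> : (d r - a r = 0)%N by lia.
by rewrite mul0n muln0.
Qed.

Lemma formula :
  ((\sum_(k < s) (if [forall j : 'I_s, (j < k)%N ==> (a j.+1 == 0%N)]
     then \prod_(j : 'I_s | (k < j)%N) (d j.+1 - a j.+1) else 0))%N)%:R =
  (if r == s then
     (if (a s <= d s)%N
      then \sum_(2 <= i < s.+1) tailprod s d a i + 1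
      else 1)
   else
     (if (a r <= d r)%N
      then \sum_(2 <= i < r.+2) tailprod s d a i
      else tailprod s d a r.+1)).
Proof.
have step1 : forall k : 'I_s,
    (if [forall j : 'I_s, (j < k)%N ==> (a j.+1 == 0%N)]
     then \prod_(j : 'I_s | (k < j)%N) (d j.+1 - a j.+1) else 0)%N
    = (if (k < r)%N then Pn k.+2 else 0)%N.
  move=> k.
  have -> : [forall j : 'I_s, (j < k)%N ==> (a j.+1 == 0%N)] = (k < r)%N.
    case: (ltnP k r) => kr.
      apply/forallP => j; apply/implyP => jk; rewrite ha0 //; lia.
    have rs : (r.-1 < s)%N by lia.
    apply/negbTE/negP => /forallP /(_ (Ordinal rs)) /implyP /=.
    rewrite prednK //; have rk : (r.-1 < k)%N by lia.
    by move=> /(_ kr) /eqP; lia.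
  case: ifP => // kr.
  rewrite /Pn big_add1 /= big_geq_mkord; by apply: eq_bigl => j.
rewrite (eq_bigr _ (fun k _ => step1 k)) -big_mkcond /=.
rewrite -(big_mkord (fun k => k < r)%N (fun k => Pn k.+2)).
have -> : (\sum_(0 <= i < s | (i < r)%N) Pn i.+2 = \sum_(0 <= k < r) Pn k.+2)%N by rewrite (big_nat_widen _ _ _ _ _ hrs).
have -> : (\sum_(0 <= k < r) Pn k.+2 = \sum_(2 <= i < r.+2) Pn i)%N.
  rewrite -[2%N]/(0 + 2)%N big_addn subn2 /=; apply: eq_bigr => i _; by rewrite addn2.
have Pe : forall i, (2 <= i < r.+2)%N -> (a r <= d r)%N -> (Pn i)%:R = tailprod s d a i.
  move=> i /andP [i2 _] h; apply: Pn_tail; [lia | by left].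
rewrite (@big_nat_recr _ _ _ r.+1 2 _ hr1) /= natrD natr_sum.
case: eqP => [rs|rs].
  have -> : Pn r.+1 = 1%N by rewrite /Pn rs big_geq.
  rewrite rs in Pe *.
  case: ifP => h.
    by congr (_ + _); apply: eq_big_nat => i /andP [i2 iS]; apply: Pe => //; rewrite i2 /=; lia.
  have h' : (d r < a r)%N by rewrite rs ltnNge h.
  rewrite big_nat big1 ?add0r // => i /andP [i2 iS]; rewrite Pn_zero //; lia.
case: ifP => h.
  rewrite Pn_tail ?ltnSn; last by right.
    by rewrite [in RHS](@big_nat_recr _ _ _ r.+1 2 _ hr1) /=; congr (_ + _); apply: eq_big_nat => i /andP [i2 iS]; apply: Pe => //; rewrite i2 /=; lia.
  lia.
rewrite big_nat big1 ?add0r; last by move=> i /andP [i2 iS]; rewrite Pn_zero //; lia.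
by apply: Pn_tail; [lia | right].
Qed.
End Formula.


Lemma phiX0 (K : fieldType) n (k : 'I_n) (m : 'X_{1..n}) (l : 'I_n) :
  l != k -> (0 < m l)%N -> phi k ('X_[m] : {mpoly K[n]}) = 0.
Proof.
move=> lk ml; rewrite phiX (bigD1 l) //= (negbTE lk) expr0n.
by rewrite (_ : (m l == 0%N) = false) ?mul0r //; apply/negbTE; rewrite -lt0n.
Qed.

Lemma phi_ideal (K : fieldType) n (k : 'I_n) (G : {mpoly K[n]} -> Prop) p :
  (forall g, G g -> phi k g = 0) -> ideal_gen G p -> phi k p = 0.
Proof.
move=> H [m [g [q [Hg ->]]]]; rewrite rmorph_sum big1 // => i _.
by rewrite rmorphM (H _ (Hg i)) mulr0.
Qed.

Section Main.
Variables (K : fieldType) (s : nat) (d a : nat -> nat) (r : nat).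
Hypotheses (hs : (2 <= s)%N)
  (hpos : forall i, (1 <= i)%N -> (i <= s)%N -> (0 < d i)%N)
  (hr1 : (1 <= r)%N) (hrs : (r <= s)%N) (har : (1 <= a r)%N)
  (ha0 : forall i, (i < r)%N -> a i = 0%N)
  (hnot : ~ ideal_gen (Lgens K s d) (monoA K s a)).

Definition D (j : 'I_s) := d j.+1.
Definition ea (j : 'I_s) := a j.+1.
Definition Am : 'X_{1..s} := [multinom a i.+1 | i < s].
Definition redL : pred 'X_{1..s} := fun m =>
  [exists i : 'I_s, exists j : 'I_s, [&& (i < j)%N, (0 < m i)%N & (D j <= m j)%N]].
Definition redL' : pred 'X_{1..s} := fun m => redL m || (Am <= m)%MM.

Lemma genE (i j : 'I_s) : ('X_i * 'X_j ^+ D j : {mpoly K[s]}) = 'X_[U_(i) + U_(j) *+ D j].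
Proof. by rewrite mpolyXD mpolyXn. Qed.

Lemma DposI (j : 'I_s) : (0 < D j)%N.
Proof. by apply: hpos => //; exact: ltn_ord. Qed.

Lemma red_gen (i j : 'I_s) : (i < j)%N -> redL (U_(i) + U_(j) *+ D j)%MM.
Proof.
move=> ij; apply/existsP; exists i; apply/existsP; exists j.
rewrite ij !mnmDE !mulmnE !mnm1E eqxx /=.
by rewrite eqxx mul1n leq_addl.
Qed.

Lemma redL_up m m' : redL m -> (m <= m')%MM -> redL m'.
Proof.
move=> /existsP [i /existsP [j /and3P [ij mi mj]]] /mnm_lepP le.
apply/existsP; exists i; apply/existsP; exists j.
by rewrite ij (leq_trans mi (le i)) (leq_trans mj (le j)).
Qed.

Lemma redL_ideal m : redL m -> ideal_gen (Lgens K s d) 'X_[m].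
Proof.
move=> /existsP [i /existsP [j /and3P [ij mi mj]]].
set g := (U_(i) + U_(j) *+ D j)%MM.
have gm : (g <= m)%MM.
  apply/mnm_lepP => l; rewrite !mnmDE mulmnE !mnm1E.
  have ji : (j == i) = false by apply/negbTE; rewrite neq_ltn ij orbT.
  case: (eqVneq i l) => [<-|il]; first by rewrite ji mul0n addn0.
  case: (eqVneq j l) => [<-|jl]; first by rewrite mul1n add0n.
  by rewrite mul0n.
rewrite -(submK gm) mpolyXD; apply: ideal_genM; apply: ideal_gen_in.
by exists i, j; split => //; rewrite genE.
Qed.

Lemma hL p : ideal_gen (Lgens K s d) p <-> (forall m, m \in msupp p -> redL m).
Proof.
apply: mono_ideal; [|exact: redL_up|exact: redL_ideal].
move=> g [i [j [ij ->]]]; exists (U_(i) + U_(j) *+ D j)%MM; split; first exact: genE.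
exact: red_gen.
Qed.

Lemma hL' p : ideal_gen (fun g => Lgens K s d g \/ g = monoA K s a) p <->
  (forall m, m \in msupp p -> redL' m).
Proof.
apply: mono_ideal.
- move=> g [[i [j [ij ->]]]|->].
    exists (U_(i) + U_(j) *+ D j)%MM; split; first exact: genE.
    by rewrite /redL' red_gen.
  by exists Am; split => //; rewrite /redL' lepm_refl orbT.
- move=> m m' /orP [h|h] le; apply/orP; [left; exact: redL_up h le|right; exact: lepm_trans h le].
- move=> m /orP [h|h].
    have := redL_ideal h; apply: ideal_gen_mono => g; by left.
  rewrite -(submK h) mpolyXD; apply: ideal_genM; apply: ideal_gen_in; by right.
Qed.


Lemma first_concl i : (r < i)%N -> (i <= s)%N -> (a i <= d i - 1)%N.
Proof.
move=> ri iS; have ipos := hpos (leq_trans hr1 (ltnW ri)) iS.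
case: (ltnP (a i) (d i)) => h; first lia.
exfalso; apply: hnot; apply: redL_ideal.
have r1 : (r.-1 < s)%N by lia.
have i1 : (i.-1 < s)%N by lia.
apply/existsP; exists (Ordinal r1); apply/existsP; exists (Ordinal i1).
rewrite /D /Am !mnmE /= !prednK //; last lia.
apply/and3P; split => //; lia.
Qed.

Definition k0idx := if r == s then 0%N else s.-1.
Lemma k0P : (k0idx < s)%N.
Proof. rewrite /k0idx; case: ifP => _; lia. Qed.
Definition k0 : 'I_s := Ordinal k0P.

Lemma gens_phi g : (Lgens K s d g \/ g = monoA K s a) -> phi k0 g = 0.
Proof.
case => [[i [j [ij ->]]]|->].
  rewrite genE; case: (eqVneq r s) => [rs|rs].
    apply: (@phiX0 K s k0 _ j).
      by rewrite -val_eqE /= /k0idx rs eqxx; apply: contraTneq ij => ->.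
    by rewrite mnmDE mulmnE !mnm1E eqxx mul1n (leq_trans (DposI j)) // leq_addl.
  apply: (@phiX0 K s k0 _ i).
    rewrite -val_eqE /= /k0idx (negbTE rs); have := ltn_ord j; lia.
  by rewrite mnmDE mulmnE !mnm1E eqxx.
have r1 : (r.-1 < s)%N by lia.
apply: (@phiX0 K s k0 _ (Ordinal r1)).
  rewrite -val_eqE /= /k0idx; case: ifP => /eqP h; lia.
by rewrite /= mnmE prednK.
Qed.

Lemma krullL : krull_dim (ideal_gen (Lgens K s d)) 1.
Proof.
apply: (@krull1 K s _ D k0).
  by move=> i j ij; apply: ideal_gen_in; exists i, j.
move=> p; apply: phi_ideal => g Lg; apply: gens_phi; by left.
Qed.

Lemma krullL' : krull_dim (ideal_gen (fun g => Lgens K s d g \/ g = monoA K s a)) 1.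
Proof.
apply: (@krull1 K s _ D k0).
  by move=> i j ij; apply: ideal_gen_in; left; exists i, j.
move=> p; apply: phi_ideal => g; exact: gens_phi.
Qed.

Lemma std_eq dd (f : {ffun 'I_s -> 'I_dd.+1}) : ~~ redL (monf f) = stdL D f.
Proof.
rewrite /redL negb_exists; apply: eq_forallb => i; rewrite negb_exists; apply: eq_forallb => j.
rewrite !mnmE; case: (i < j)%N; case: (0 < f i)%N => //=; by case: leqP.
Qed.

Lemma geq_eq dd (f : {ffun 'I_s -> 'I_dd.+1}) : (Am <= monf f)%MM = geq_e ea f.
Proof.
apply/mnm_lepP/forallP => H j; have := H j; by rewrite /Am !mnmE.
Qed.

End Main.

Unset Implicit Arguments.

Theorem proposition5p3 (K : fieldType) (s : nat) (d a : nat -> nat) (r : nat) :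
  (2 <= s)%N ->
  (forall i j, (1 <= i)%N -> (i <= j)%N -> (j <= s)%N -> (d i <= d j)%N) ->
  (forall i, (1 <= i)%N -> (i <= s)%N -> (0 < d i)%N) ->
  (2 <= d 1)%N ->
  (1 <= r)%N -> (r <= s)%N -> (1 <= a r)%N ->
  (forall i, (i < r)%N -> a i = 0%N) ->
  ~ ideal_gen (Lgens K s d) (monoA K s a) ->
  (forall i, (r < i)%N -> (i <= s)%N -> (a i <= d i - 1)%N) /\
  exists eL : rat,
    is_degree (ideal_gen (Lgens K s d)) eL /\
    is_degree (ideal_gen (fun g => Lgens K s d g \/ g = monoA K s a))
      (eL - (if r == s then
               (if (a s <= d s)%N
                then \sum_(2 <= i < s.+1) tailprod s d a i + 1
                else 1)
             else
               (if (a r <= d r)%N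
                then \sum_(2 <= i < r.+2) tailprod s d a i
                else tailprod s d a r.+1))).
Proof.
move=> hs hmono hpos hd1 hr1 hrs har ha0 hnot.
have fc := first_concl hs hpos hr1 hrs har hnot.
split; first exact: fc.
pose e0 := fun _ : 'I_s => 0%N.
pose N := (\sum_(j : 'I_s) D d j + \sum_(j : 'I_s) ea a j).+1.
pose cL := (\sum_(k < s) (if [forall j : 'I_s, (j < k)%N ==> (e0 j == 0%N)]
                 then \prod_(j : 'I_s | (k < j)%N) (D d j - e0 j) else 0))%N.
pose X := (\sum_(k < s) (if [forall j : 'I_s, (j < k)%N ==> (ea a j == 0%N)]
                 then \prod_(j : 'I_s | (k < j)%N) (D d j - ea a j) else 0))%N.
have hX := formula hr1 hrs har ha0 fc hpos.
have hX' := hX; rewrite -[LHS]/(X%:R : rat) in hX'.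
have Nb : forall dd, (N <= dd)%N -> forall e : 'I_s -> nat, (forall k, e k <= \sum_(j : 'I_s) ea a j)%N ->
    (0 < dd)%N /\ (forall k, \sum_(j : 'I_s) D d j + e k < dd)%N.
  move=> dd hN e he; split; first by apply: leq_trans hN.
  move=> k; apply: leq_trans hN; by rewrite ltnS leq_add2l.
have eab : forall k : 'I_s, (ea a k <= \sum_(j : 'I_s) ea a j)%N.
  by move=> k; rewrite (bigD1 k) //= leq_addr.
have cntL : forall dd, (N <= dd)%N -> #|stdset (@redL s d) dd| = cL.
  move=> dd hN; have [h1 h2] := Nb dd hN e0 (fun _ => leq0n _).
  rewrite /cL -(count_all h1 h2); apply: eq_card => f; rewrite !inE std_eq.
  have -> : geq_e e0 f = true by apply/forallP.
  by rewrite andbT.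
have cntX : forall dd, (N <= dd)%N ->
    #|[pred f : {ffun 'I_s -> 'I_dd.+1} | (sumf f == dd) && stdL (D d) f && geq_e (ea a) f]| = X.
  move=> dd hN; have [h1 h2] := Nb dd hN (ea a) eab; exact: count_all h1 h2.
have cntL' : forall dd, (N <= dd)%N -> (#|stdset (@redL' s d a) dd| + X = cL)%N.
  move=> dd hN; rewrite -(cntL dd hN) -(cntX dd hN) addnC.
  rewrite -[RHS](cardID [pred f | geq_e (ea a) f]); congr (_ + _); apply: eq_card => f; rewrite !inE.
    by rewrite std_eq.
  by rewrite /redL' negb_or std_eq geq_eq /sumf; case: (_ == _); case: (stdL _ _); case: (geq_e _ _).
exists (cL%:R); split.
  exists 1%N, (fun dd => #|stdset (@redL s d) dd|); split; first exact: (krullL K hs hpos hr1 hrs har).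
  split; first exact: (hilb (@hL K s d)).
  move=> eps he; exists N => dd hN /=.
  by rewrite cntL // expr0 !divr1 subrr normr0.
exists 1%N, (fun dd => #|stdset (@redL' s d a) dd|); split; first exact: (krullL' K hs hpos hr1 hrs har).
split; first exact: (hilb (@hL' K s d a)).
move=> eps he; exists N => dd hN /=.
rewrite -hX' -(cntL' dd hN) natrD addrK expr0 !divr1 subrr normr0 //.
Qed.
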